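(* Let $Z\colon\mathbb{R}^n\to\mathbb{R}^m$ be a jointly measurable random map defined on the probability space $(\Omega,\mathcal{F},\mathbb{P})$. Let $\mu$ be a Borel probability measure on $\mathbb{R}^n$ and let $\gamma\in\mathbb{R}$. Then the set $$\mathcal{D}=\Big\{(\omega,t)\in\Omega\times\mathbb{R}^n:\ \liminf_{r\to0+}r^{-\gamma}\mu(\{s: Z(s,\omega)\in B(Z(t,\omega),r)\})=0\Big\}$$ belongs to $\mathcal{F}\otimes\mathcal{B}(\mathbb{R}^n)$.
   Context: $Z$ is jointly measurable if $(t,\omega)\mapsto Z(t,\omega)$ is measurable from $\mathcal{B}(\mathbb{R}^n)\otimes\mathcal{F}$ to $\mathcal{B}(\mathbb{R}^m)$. $B(z,r)$ is the closed Euclidean ball in $\mathbb{R}^m$. *)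

(* Defs.v *)
From HB Require Import structures.
From mathcomp Require Import all_boot all_order all_algebra.
From mathcomp Require Import all_classical all_reals all_analysis.
Set Implicit Arguments. Unset Strict Implicit. Unset Printing Implicit Defensive.
Import Order.TTheory GRing.Theory Num.Theory.
Import numFieldTopology.Exports.
Local Open Scope ring_scope.
Local Open Scope classical_set_scope.

(* R^k is modelled as k.-tuple R, whose canonical measurable structure is the
   product sigma-algebra of the Borel sets of R, i.e. the Borel sets of R^k. *)

Definition euclid_dist (R : realType) (k : nat) (x y : k.-tuple R) : R :=
  Num.sqrt (\sum_(i < k) (tnth x i - tnth y i) ^+ 2).

Definition cball_euclid (R : realType) (k : nat) (z : k.-tuple R) (r : R)
  : set (k.-tuple R) := [set y | euclid_dist y z <= r].

Definition set_D (R : realType) (n m : nat) (Omega : Type)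
  (Z : n.-tuple R -> Omega -> m.-tuple R)
  (mu : set (n.-tuple R) -> \bar R) (gamma : R) : set (Omega * n.-tuple R) :=
  [set p | limf_einf
      (fun r : R => ((r `^ (- gamma))%:E *
         mu [set s | Z s p.1 \in cball_euclid (Z p.2 p.1) r])%E)
      ((0 : R)^'+) = 0%E].

(* Main.v *)
Require Import Defs.
From HB Require Import structures.
From mathcomp Require Import all_boot all_order all_algebra.
From mathcomp Require Import all_classical all_reals all_analysis.
From mathcomp Require Import measurable_realfun.
Import Order.TTheory GRing.Theory Num.Theory.
Local Open Scope ring_scope.
Import numFieldTopology.Exports.
Local Open Scope classical_set_scope.

Lemma small_inv (R : realType) (e : R) : 0 < e -> exists k : nat, k.+1%:R^-1 < e.
Proof.
move=> e0; exists (Num.truncn (e^-1)).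
rewrite -[e in _ < e]invrK ltf_pV2 ?posrE ?invr_gt0 //.
exact: truncnS_gt.
Qed.

Lemma liminf0P (R : realType) (g : R -> \bar R) :
  (forall r, (0 <= g r)%E) ->
  (forall (r : R) (e : R), 0 < r -> (g r < e%:E)%E ->
     exists q : rat, 0 < (ratr q : R) < r /\ (g (ratr q) < e%:E)%E) ->
  (limf_einf g (0:R)^'+ = 0%E <->
   forall k j : nat, exists q : rat, 0 < (ratr q : R) < j.+1%:R^-1 /\
      (g (ratr q) < (k.+1%:R^-1)%:E)%E).
Proof.
move=> g0 gapp; split.
  move=> L0 k j.
  set V := [set r : R | 0 < r < j.+1%:R^-1].
  have FV : (0:R)^'+ V.
    near=> r; apply/andP; split; near: r; first exact: nbhs_right_gt.
    by apply: nbhs_right_lt; rewrite invr_gt0.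
  have : (ereal_inf (g @` V) < (k.+1%:R^-1)%:E)%E.
    apply: (le_lt_trans (y := 0%E)); last by rewrite lte_fin invr_gt0.
    rewrite -L0 limf_einfE; apply: ereal_sup_ubound; by exists V.
  move/ereal_inf_lt => [_ [r /andP[r0 rj] <-]] gr.
  have [q [/andP[q0 qr] gq]] := gapp r _ r0 gr.
  exists q; split => //; rewrite q0 /=; exact: lt_trans qr rj.
move=> H; apply/eqP; rewrite eq_le; apply/andP; split; last first.
  rewrite limf_einfE; apply: le_ereal_sup_tmp; exists (ereal_inf (g @` setT)).
    by exists setT => //; exact: filterT.
  by apply: le_ereal_inf_tmp => _ [r _ <-]; exact: g0.
rewrite limf_einfE; apply: ge_ereal_sup => _ [V FV <-].
move: FV; rewrite /within => /nbhs_ballP[del del0 Hdel].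
have [j jd] := @small_inv R del del0.
suff hk : forall k : nat, (ereal_inf (g @` V) <= (k.+1%:R^-1)%:E)%E.
  move: (ereal_inf _) hk => [x| |] hk //.
  - rewrite lee_fin; apply/negPn/negP; rewrite -ltNge => x0.
    have [k kx] := @small_inv R x x0.
    by have := hk k; rewrite lee_fin leNgt kx.
  - by have := hk 0%N; rewrite leNgt ltey.
move=> k; have [q [/andP[q0 qj] gq]] := H k j.
apply: ge_ereal_inf; exists (g (ratr q)); last exact: ltW.
exists (ratr q) => //; apply: Hdel => //.
rewrite /ball /= sub0r normrN gtr0_norm //; exact: lt_trans qj jd.
Unshelve. all: by end_near.
Qed.
Section S.
Context (R : realType) (d : measure_display) (Omega : measurableType d)
  (n m : nat) (Z : n.-tuple R -> Omega -> m.-tuple R)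
  (hZ : measurable_fun [set: n.-tuple R * Omega]
          (fun p : n.-tuple R * Omega => Z p.1 p.2))
  (mu : probability (n.-tuple R) R).

Let T := n.-tuple R.

Lemma mdist : measurable_fun [set: (Omega * T) * T]
  (fun p => euclid_dist (Z p.2 p.1.1) (Z p.1.2 p.1.1)).
Proof.
rewrite /euclid_dist.
suff ms : measurable_fun [set: (Omega * T) * T] (fun p =>
   \sum_(i < m) (tnth (Z p.2 p.1.1) i - tnth (Z p.1.2 p.1.1) i) ^+ 2).
  exact: (measurableT_comp (measurable_realfun.continuous_measurable_fun (@sqrt_continuous R)) ms).
apply: measurable_sum => i.
apply: measurable_realfun.measurable_funX.
have mZ1 : measurable_fun [set: (Omega * T) * T] (fun p => Z p.2 p.1.1).
  have h : measurable_fun setT (fun p : (Omega * T) * T => (p.2, p.1.1)).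
    apply: measurable_fun_pair; first exact: measurable_snd.
    exact: measurableT_comp measurable_fst measurable_fst.
  exact: (measurableT_comp hZ h).
have mZ2 : measurable_fun [set: (Omega * T) * T] (fun p => Z p.1.2 p.1.1).
  have h : measurable_fun setT (fun p : (Omega * T) * T => (p.1.2, p.1.1)).
    apply: measurable_fun_pair.
      exact: measurableT_comp measurable_snd measurable_fst.
    exact: measurableT_comp measurable_fst measurable_fst.
  exact: (measurableT_comp hZ h).
apply: measurable_realfun.measurable_funB.
  exact: (measurableT_comp (measurable_tnth i) mZ1).
exact: (measurableT_comp (measurable_tnth i) mZ2).
Qed.

Definition Bs (p : Omega * T) (r : R) :=
  [set s | Z s p.1 \in cball_euclid (Z p.2 p.1) r].

Definition Aset (r : R) := [set p : (Omega * T) * T |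
  euclid_dist (Z p.2 p.1.1) (Z p.1.2 p.1.1) <= r].

Lemma mAset r : measurable (Aset r).
Proof.
have := mdist measurableT _ (measurable_itv `]-oo, r]%R).
rewrite setTI; congr measurable; apply/seteqP; split => x /=;
  by rewrite in_itv /= ?andbT.
Qed.

Lemma BsE p r : Bs p r = xsection (Aset r) p.
Proof.
rewrite /xsection /Bs; apply/seteqP; split => s /=; rewrite !in_setE /cball_euclid /Aset //=.
Qed.

Lemma mBs p r : measurable (Bs p r).
Proof. rewrite BsE; exact: measurable_xsection (mAset r). Qed.

Lemma mmuB r : measurable_fun [set: Omega * T] (fun p => mu (Bs p r) : \bar R).
Proof.
rewrite (_ : (fun p => _) = mu \o xsection (Aset r)).
  exact: measurable_fun_xsection (mAset r).
by apply/funext => p; rewrite BsE.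
Qed.


Variable gamma : R.

Definition fD (p : Omega * T) (r : R) : \bar R :=
  ((r `^ (- gamma))%:E * mu (Bs p r))%E.

Lemma fD_ge0 p r : (0 <= fD p r)%E.
Proof. by rewrite /fD mule_ge0 // lee_fin powR_ge0. Qed.

Lemma fD_app p (r e : R) : 0 < r -> (fD p r < e%:E)%E ->
  exists q : rat, 0 < (ratr q : R) < r /\ (fD p (ratr q) < e%:E)%E.
Proof.
move=> r0 fr.
have mfin : mu (Bs p r) = (fine (mu (Bs p r)))%:E.
  rewrite fineK // ge0_fin_numE ?measure_ge0 //.
  exact: le_lt_trans (probability_le1 mu (mBs p r)) (ltey _).
set c := fine (mu (Bs p r)) in mfin.
move: fr; rewrite /fD mfin -EFinM lte_fin => fr.
have cont : {for r, continuous (fun x : R => x `^ (- gamma))}.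
  apply: differentiable_continuous; apply/derivable1_diffP.
  by apply: derivable_powR; rewrite in_itv /= andbT.
have hc : (c * x `^ (- gamma)) @[x --> r] --> c * r `^ (- gamma).
  exact: cvgMl_tmp cont.
have hn : \forall t \near r, c * t `^ (- gamma) < e.
  have hh := cvgr_lt _ hc.
  apply: hh; by rewrite mulrC.
move: hn => /nbhs_ballP [eta eta0 Heta].
have hlt : Num.max 0 (r - eta) < r by rewrite gt_max r0 /= ltrBlDr ltrDl.
have [q] := rat_in_itvoo hlt.
rewrite in_itv /= gt_max => /andP[/andP[q0 qe] qr].
exists q; split; first by rewrite q0.
apply: (le_lt_trans (y := ((ratr q) `^ (- gamma))%:E * mu (Bs p r))%E).
  apply: lee_wpmul2l; first by rewrite lee_fin powR_ge0.
  apply: le_measure; rewrite ?inE; try exact: mBs.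
  move=> s; rewrite /Bs /= !in_setE /cball_euclid => h.
  exact: le_trans h (ltW qr).
rewrite mfin -EFinM lte_fin mulrC; apply: Heta.
rewrite /ball /= gtr0_norm ?subr_gt0 //.
by rewrite ltrBlDr -ltrBlDl.
Qed.

End S.

Theorem lemma3p5 (R : realType) (d : measure_display) (Omega : measurableType d)
  (P : probability Omega R) (n m : nat)
  (Z : n.-tuple R -> Omega -> m.-tuple R)
  (hZ : measurable_fun [set: n.-tuple R * Omega]
          (fun p : n.-tuple R * Omega => Z p.1 p.2))
  (mu : probability (n.-tuple R) R) (gamma : R) :
  measurable (set_D Z mu gamma).
Proof.
pose G (k j : nat) (q : rat) := [set p : Omega * n.-tuple R |
  0 < (ratr q : R) < j.+1%:R^-1 /\
  (fD R d Omega n m Z mu gamma p (ratr q) < (k.+1%:R^-1)%:E)%E].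
have -> : set_D Z mu gamma = \bigcap_(k in [set: nat]) \bigcap_(j in [set: nat])
    \bigcup_(q in [set: rat]) G k j q.
  apply/seteqP; split => p /=.
  - move=> /(@liminf0P R _ (fD_ge0 R d Omega n m Z mu gamma p)
        (fD_app R d Omega n m Z hZ mu gamma p)) H k _ j _.
    by have [q [h1 h2]] := H k j; exists q.
  - move=> H; apply/(@liminf0P R _ (fD_ge0 R d Omega n m Z mu gamma p)
        (fD_app R d Omega n m Z hZ mu gamma p)) => k j.
    by have [q _ [h1 h2]] := H k I j I; exists q.
apply: bigcapT_measurable => k; apply: bigcapT_measurable => j.
apply: bigcupT_measurable_rat => q.
have [b|b] := boolP (0 < (ratr q : R) < j.+1%:R^-1).
  rewrite (_ : G k j q = [set: Omega * n.-tuple R] `&`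
     [set p | (fD R d Omega n m Z mu gamma p (ratr q) < (fun=> (k.+1%:R^-1)%:E) p)%E]).
    apply: measurable_lte => //.
    apply: measurable_funeM; exact: mmuB R d Omega n m Z hZ mu _.
  by apply/seteqP; split => p /=; [case | move=> [_ h]].
rewrite (_ : G k j q = set0) //; apply/seteqP; split => p //= [h _].
by rewrite h in b.
Qed.
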